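(* Let $N\ge1$, $h,\varepsilon\in(0,1)$, and let $\Phi:[-1,1]^N\to[-1,1]^N$ be the opinion operator defined in the context. Let $V^0=(v^0_1,\dots,v^0_N)\in[-1,1]^N$ with $v^0_1\le\dots\le v^0_N$, and let $V^n=\Phi^n(V^0)=(v^n_1,\dots,v^n_N)$. Then: (a) for every $n\ge0$, $v^n_1\le\dots\le v^n_N$; (b) if $v^n_k=1$, then $v^n_l=1$ for all $l>k$; (c) if $v^n_k=1$, then $v^m_k=1$ for all $m>n$.
   Context: For $V=(v_1,\dots,v_N)\in[-1,1]^N$ and each $k$, let $J(v_k)=\{l\in\{1,\dots,N\}:|v_l-v_k|\le\varepsilon\}$ and $I(v_k)=|J(v_k)|$. Put $w_k(V)=v_k+\frac{h}{I(v_k)}\sum_{l\in J(v_k)}v_l$. Then $\Phi(V)=(v_1',\dots,v_N')$ where $v_k'=-1$ if $w_k<-1$, $v_k'=1$ if $w_k>1$, and $v_k'=w_k$ if $|w_k|\le1$. *)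

(* Defs.v *)
From HB Require Import structures.
From mathcomp Require Import all_boot all_order all_algebra.
Set Implicit Arguments. Unset Strict Implicit. Unset Printing Implicit Defensive.
Import Order.TTheory GRing.Theory Num.Theory.
Local Open Scope ring_scope.

(* An opinion profile V = (v_1,...,v_N) is a function 'I_N -> R
   (index k : 'I_N stands for k+1 in the paper). *)

Definition Jset (R : realFieldType) (N : nat) (eps : R) (V : 'I_N -> R) (k : 'I_N)
  : {set 'I_N} := [set l | `|V l - V k| <= eps].

Definition Icard (R : realFieldType) (N : nat) (eps : R) (V : 'I_N -> R) (k : 'I_N)
  : nat := #|Jset eps V k|.

Definition wk (R : realFieldType) (N : nat) (h eps : R) (V : 'I_N -> R) (k : 'I_N) : R :=
  V k + h / (Icard eps V k)%:R * \sum_(l in Jset eps V k) V l.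

Definition clip (R : realFieldType) (w : R) : R :=
  if w < -1 then -1 else if 1 < w then 1 else w.

Definition Phi (R : realFieldType) (N : nat) (h eps : R) (V : 'I_N -> R) : 'I_N -> R :=
  fun k => clip (wk h eps V k).

(* Main.v *)
Require Import Defs.
From HB Require Import structures.
From mathcomp Require Import all_boot all_order all_algebra.
From mathcomp Require Import lra.
Import Order.TTheory GRing.Theory Num.Theory.
Local Open Scope ring_scope.

Lemma dbl_zero (R : realFieldType) (N : nat) (P : pred 'I_N) (f : 'I_N -> R) :
  \sum_(i | P i) \sum_(j | P j) (f i - f j) = 0.
Proof.
under eq_bigr do rewrite sumrB.
by rewrite sumrB exchange_big /= subrr.
Qed.

Lemma avg_key (R : realFieldType) (N : nat) (eps : R) (f : 'I_N -> R) k l :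
  f k <= f l ->
  \sum_(i in Jset eps f k) \sum_(j in Jset eps f l) (f i - f j) <= 0.
Proof.
move=> Hkl.
set S := Jset eps f k; set T := Jset eps f l.
rewrite (bigID (fun i => i \in T)) /=.
have H1 : forall i j, i \in S -> i \notin T -> j \in T -> f i - f j <= 0.
  move=> i j; rewrite !inE !ler_norml => /andP[a b].
  rewrite negb_and -!ltNge => /orP[c|c] /andP[d e]; lra.
have H2 : forall i j, i \in S -> j \in T -> j \notin S -> f i - f j <= 0.
  move=> i j; rewrite !inE !ler_norml => /andP[a b] /andP[d e].
  rewrite negb_and -!ltNge => /orP[c|c]; lra.
rewrite -[X in _ <= X]addr0; apply: lerD; last first.
  apply: sumr_le0 => i /andP[iS iT]; apply: sumr_le0 => j jT; exact: H1.
under eq_bigr do rewrite (bigID (fun j => j \in S)) /=.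
rewrite big_split /= -[X in _ <= X]addr0; apply: lerD; last first.
  apply: sumr_le0 => i /andP[iS iT]; apply: sumr_le0 => j /andP[jT jS]; exact: H2.
have -> : \sum_(i in S | i \in T) \sum_(j in T | j \in S) (f i - f j)
   = \sum_(i in S | i \in T) \sum_(j in S | j \in T) (f i - f j).
  apply: eq_bigr => i _; apply: eq_bigl => j; exact: andbC.
by rewrite dbl_zero.
Qed.

Lemma avg_mono (R : realFieldType) (N : nat) (eps : R) (f : 'I_N -> R) k l :
  f k <= f l ->
  (Icard eps f l)%:R * \sum_(i in Jset eps f k) f i <=
  (Icard eps f k)%:R * \sum_(i in Jset eps f l) f i.
Proof.
move=> /(@avg_key _ _ eps f k l).
under eq_bigr do rewrite sumrB sumr_const.
rewrite sumrB sumr_const sumrMnl /Icard !mulr_natl subr_le0 //.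
Qed.

Lemma Jself (R : realFieldType) (N : nat) (eps : R) (f : 'I_N -> R) k :
  0 < eps -> k \in Jset eps f k.
Proof. by move=> e0; rewrite inE subrr normr0 ltW. Qed.

Lemma Icard_gt0 (R : realFieldType) (N : nat) (eps : R) (f : 'I_N -> R) k :
  0 < eps -> (0 < Icard eps f k)%N.
Proof. by move=> e0; apply/card_gt0P; exists k; exact: Jself. Qed.

Lemma clip_mono (R : realFieldType) (a b : R) : a <= b -> clip a <= clip b.
Proof.
rewrite /clip => ab.
case: (ltP a (-1)) => a1; case: (ltP b (-1)) => b1.
all: case: (ltP 1 a) => a2; case: (ltP 1 b) => b2.
all: lra.
Qed.

Lemma clip_bound (R : realFieldType) (a : R) : -1 <= clip a <= 1.
Proof.
rewrite /clip; case: (ltP a (-1)) => a1; case: (ltP 1 a) => a2.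
all: apply/andP; split; lra.
Qed.

Lemma Phi_mono (R : realFieldType) (N : nat) (h eps : R) (f : 'I_N -> R) k l :
  0 < h -> 0 < eps -> f k <= f l -> Phi h eps f k <= Phi h eps f l.
Proof.
move=> h0 e0 Hkl; apply: clip_mono; rewrite /wk.
apply: lerD => //.
have ck := @Icard_gt0 _ _ eps f k e0; have cl := @Icard_gt0 _ _ eps f l e0.
rewrite -!mulrA ler_pM2l //.
have pk : 0 < (Icard eps f k)%:R :> R by rewrite ltr0n.
have pl : 0 < (Icard eps f l)%:R :> R by rewrite ltr0n.
rewrite mulrC [X in _ <= X]mulrC ler_pdivrMr // mulrAC ler_pdivlMr //.
rewrite mulrC [X in _ <= X]mulrC; exact: avg_mono.
Qed.

Lemma Phi_one (R : realFieldType) (N : nat) (h eps : R) (f : 'I_N -> R) k :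
  0 < h -> 0 < eps -> eps < 1 -> f k = 1 -> Phi h eps f k = 1.
Proof.
move=> h0 e0 e1 fk; rewrite /Phi /clip /wk.
have pos : 0 < \sum_(l in Jset eps f k) f l.
  rewrite (bigD1 k) /=; last exact: Jself.
  rewrite fk; apply: ltr_pwDl => //; apply: sumr_ge0 => i /andP[].
  rewrite inE fk ler_norml => /andP[a b] _; lra.
have pk : 0 < (Icard eps f k)%:R :> R by rewrite ltr0n Icard_gt0.
have : 0 < h / (Icard eps f k)%:R * \sum_(l in Jset eps f k) f l.
  by apply: mulr_gt0 => //; apply: divr_gt0.
rewrite fk => p.
case: ifP => [|_]; first lra.
case: ifP => // /negbT; rewrite -leNgt; lra.
Qed.

Theorem corollary1 (R : realFieldType) (N : nat) (h eps : R)
  (hN : (1 <= N)%N)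
  (h0 : 0 < h) (h1 : h < 1) (e0 : 0 < eps) (e1 : eps < 1)
  (V0 : 'I_N -> R)
  (HV0 : forall k : 'I_N, -1 <= V0 k <= 1)
  (Hsorted : forall k l : 'I_N, (k <= l)%N -> V0 k <= V0 l) :
  let V := fun n : nat => iter n (Phi h eps) V0 in
  (forall (n : nat) (k l : 'I_N), (k <= l)%N -> V n k <= V n l) /\
  (forall (n : nat) (k l : 'I_N), V n k = 1 -> (k < l)%N -> V n l = 1) /\
  (forall (n m : nat) (k : 'I_N), V n k = 1 -> (n < m)%N -> V m k = 1).
Proof.
move=> V.
have Ha : forall (n : nat) (k l : 'I_N), (k <= l)%N -> V n k <= V n l.
  elim=> [|n IH] k l kl; first exact: Hsorted.
  rewrite /V /=; apply: Phi_mono => //; exact: IH.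
have Hb : forall (n : nat) (k : 'I_N), -1 <= V n k <= 1.
  by case=> [|n] k; [exact: HV0 | exact: clip_bound].
split => //; split.
  move=> n k l Vk kl; have := Ha n k l (ltnW kl); have := Hb n l.
  rewrite Vk => /andP[_ a] b; apply/eqP; rewrite eq_le a b //.
move=> n m k Vk; elim: m => [|m IH] //; rewrite ltnS leq_eqVlt => /orP[/eqP<-|nm].
  by rewrite /V /=; apply: Phi_one.
by rewrite /V /=; apply: Phi_one => //; apply: IH.
Qed.
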